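(* Fix $m,n,s\in\mathbb{N}$ with $s\le m\le n$. Suppose that there exists an $m$-by-$n$ matrix $A$ with integer entries such that any $s$ of the columns of $A$ are linearly independent. Then there also exists an $m$-by-$n$ matrix $B$ with integer entries such that any $s$ of the columns of $B$ are linearly independent, $B$ has rank $m$, and $$\|B\|_{\ell_2^n\to\ell_2^m}\le\sqrt{1+\|A\|_{\ell_2^n\to\ell_2^m}^2}.$$
   Context: $\|\cdot\|_{\ell_2^n\to\ell_2^m}$ denotes the operator norm from $\mathbb{R}^n$ to $\mathbb{R}^m$, both equipped with the Euclidean norm. *)

(* Defs.v *)
From HB Require Import structures.
From mathcomp Require Import all_boot all_order all_algebra.
From mathcomp Require Import all_classical all_reals.
Set Implicit Arguments. Unset Strict Implicit. Unset Printing Implicit Defensive.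
Import Order.TTheory GRing.Theory Num.Theory.
Local Open Scope ring_scope.
Local Open Scope classical_set_scope.

Definition intmx (R : realType) (m n : nat) (A : 'M[int]_(m, n)) : 'M[R]_(m, n) :=
  map_mx (fun z : int => z%:~R) A.

Definition norm2 (R : realType) (n : nat) (x : 'cV[R]_n) : R :=
  Num.sqrt (\sum_(i < n) x i 0 ^+ 2).

Definition opnorm (R : realType) (m n : nat) (A : 'M[R]_(m, n)) : R :=
  sup [set norm2 (A *m x) | x in [set x : 'cV[R]_n | norm2 x <= 1]].

Definition any_s_cols_indep (F : fieldType) (m n s : nat) (A : 'M[F]_(m, n)) : Prop :=
  forall f : 'I_s -> 'I_n, injective f -> row_free (colsub f A)^T.

(* Main.v *)
From HB Require Import structures.
From mathcomp Require Import all_boot all_order all_algebra.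
From mathcomp Require Import all_classical all_reals.
From mathcomp Require Import zify.
From mathcomp Require Import lra.
Require Import Defs.
Import Order.TTheory GRing.Theory Num.Theory.
Local Open Scope ring_scope.

Section Rep.
Variables (F : fieldType) (m n : nat).

Definition rep (p : 'I_m -> option 'I_n) (A : 'M[F]_(m, n)) : 'M[F]_(m, n) :=
  \matrix_(t, l) if p t is Some k then (k == l)%:R else A t l.

Definition pinj (p : 'I_m -> option 'I_n) :=
  forall i i' k, p i = Some k -> p i' = Some k -> i = i'.

Lemma row_rep_some p A t k : p t = Some k -> row t (rep p A) = delta_mx 0 k.
Proof. by move=> e; apply/rowP => l; rewrite !mxE e eqxx /= eq_sym. Qed.

Lemma key_step (A : 'M[F]_(m, n)) : (m <= n)%N -> forall d p, pinj p -> (A <= rep p A)%MS ->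
  (m - \rank (rep p A) <= d)%N ->
  exists p', [/\ pinj p', (A <= rep p' A)%MS & \rank (rep p' A) = m].
Proof.
move=> mn; elim=> [|d IH] p pi sub hd.
  exists p; split => //; apply/eqP; rewrite eqn_leq rank_leq_row /=.
  by rewrite -subn_eq0 -leqn0.
have [full|nfull] := boolP (row_free (rep p A)).
  by exists p; split => //; apply/eqP.
set B := rep p A.
have [i hi] := row_freePn _ nfull.
have : ~~ (1%:M <= B)%MS.
  apply/negP => /mxrankS; rewrite mxrank1 => h.
  move: nfull; rewrite /row_free; have := rank_leq_row B => h2.
  by rewrite eqn_leq h2 (leq_trans mn h).
case/row_subPn => j; rewrite row1 => hj.
pose p' t := if t == i then Some j else p t.
have pi' : pinj p'.
  have notj t : p t <> Some j.
    move=> e; move: hj; rewrite -(row_rep_some _ A _ _ e).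
    by rewrite row_sub.
  move=> a b k; rewrite /p'.
  case: eqP => [-> [<-]|_ ea]; case: eqP => [-> //|_ eb].
  - by move/notj: eb.
  - by case=> ek; move: ea; rewrite -ek => /notj.
  - exact: pi ea eb.
have BB' : (B <= rep p' A)%MS.
  apply/row_subP => t; have [->|nt] := eqVneq t i.
    apply: (submx_trans hi); apply/row_subP => k.
    rewrite row'Esub row_rowsub.
    have -> : row (lift i k) B = row (lift i k) (rep p' A).
      apply/rowP => l; rewrite !mxE /p'.
      by rewrite eq_sym (negPf (neq_lift i k)).
    exact: row_sub.
  have -> : row t B = row t (rep p' A).
    by apply/rowP => l; rewrite !mxE /p' (negPf nt).
  exact: row_sub.
have lt : (B < rep p' A)%MS.
  rewrite ltmxE BB' /=; apply/negP => h; move: hj.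
  rewrite -(row_rep_some _ A _ _ (_ : p' i = Some j)); last by rewrite /p' eqxx.
  by rewrite (submx_trans (row_sub _ _) h).
apply: (IH p') => //; first exact: submx_trans sub BB'.
have := rank_ltmx lt; move: hd; rewrite -/B.
have := rank_leq_row (rep p' A). lia.
Qed.

Lemma key (A : 'M[F]_(m, n)) : (m <= n)%N ->
  exists p, [/\ pinj p, (A <= rep p A)%MS & \rank (rep p A) = m].
Proof.
move=> mn; have e : rep (fun _ => None) A = A by apply/matrixP => i j; rewrite mxE.
apply: (@key_step A mn m (fun _ => None)) => //.
- by rewrite e submx_refl.
- exact: leq_subr.
Qed.

End Rep.
Arguments rep {F m n}.
Arguments pinj {m n}.
Arguments key {F m n}.
Set Implicit Arguments. Unset Strict Implicit.
Section Norm.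
Variable R : realType.

Lemma norm2_ge0 n (x : 'cV[R]_n) : 0 <= norm2 x.
Proof. exact: sqrtr_ge0. Qed.

Lemma norm2_sq n (x : 'cV[R]_n) : norm2 x ^+ 2 = \sum_(i < n) x i 0 ^+ 2.
Proof. by rewrite sqr_sqrtr // sumr_ge0 // => i _; rewrite sqr_ge0. Qed.

Lemma coord_le1 n (x : 'cV[R]_n) j : norm2 x <= 1 -> `|x j 0| <= 1.
Proof.
move=> h.
have h0 : norm2 x ^+ 2 <= 1.
  have := norm2_ge0 x; nra.
have h1 : x j 0 ^+ 2 <= 1.
  move: h0; rewrite norm2_sq => h2; apply: le_trans _ h2.
  rewrite (bigD1 j) //= lerDl; by apply: sumr_ge0 => i _; rewrite sqr_ge0.
have h3 : `|x j 0| ^+ 2 = x j 0 ^+ 2.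
  by rewrite real_normK ?num_real.
by move: h1; rewrite -h3 expr_le1.
Qed.

Lemma opnorm_bounded m n (A : 'M[R]_(m, n)) :
  exists C, forall x : 'cV[R]_n, norm2 x <= 1 -> norm2 (A *m x) <= C.
Proof.
pose c i := \sum_(j < n) `|A i j|.
exists (Num.sqrt (\sum_(i < m) c i ^+ 2)) => x hx.
rewrite /norm2 ler_sqrt; last by rewrite sumr_ge0 // => i _; rewrite sqr_ge0.
apply: ler_sum => i _.
have hc : `|(A *m x) i 0| <= c i.
  rewrite mxE; apply: le_trans (ler_norm_sum _ _ _) _.
  apply: ler_sum => j _; rewrite normrM.
  have := coord_le1 j hx; have := normr_ge0 (A i j); have := normr_ge0 (x j 0); nra.
have h3 : `|(A *m x) i 0| ^+ 2 = (A *m x) i 0 ^+ 2 by rewrite real_normK ?num_real.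
have := normr_ge0 ((A *m x) i 0); nra.
Qed.

Lemma opnorm_ub m n (A : 'M[R]_(m, n)) (x : 'cV[R]_n) :
  norm2 x <= 1 -> norm2 (A *m x) <= opnorm A.
Proof.
move=> hx; apply: sup_upper_bound; last by exists x.
split; first by exists (norm2 (A *m x)), x.
have [C hC] := opnorm_bounded A.
by exists C => _ [y hy <-]; apply: hC.
Qed.

Lemma opnorm_le m n (A : 'M[R]_(m, n)) c :
  (forall x : 'cV[R]_n, norm2 x <= 1 -> norm2 (A *m x) <= c) -> opnorm A <= c.
Proof.
move=> h; apply: ge_sup; last by move=> _ [y hy <-]; apply: h.
exists (norm2 (A *m 0)), 0 => //=.
by rewrite /norm2 big1 ?sqrtr0 // => i _; rewrite mxE expr0n.
Qed.

Lemma rep_mul m n p (A : 'M[R]_(m, n)) (x : 'cV[R]_n) i :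
  (rep p A *m x) i 0 = if p i is Some k then x k 0 else (A *m x) i 0.
Proof.
rewrite [LHS]mxE; case e: (p i) => [k|].
  rewrite (bigD1 k) //= big1 ?addr0; first by rewrite mxE e eqxx mul1r.
  by move=> l /negPf nl; rewrite mxE e eq_sym nl mul0r.
by rewrite mxE; apply: eq_bigr => l _; rewrite mxE e.
Qed.

Lemma sum_rep m n p (A : 'M[R]_(m, n)) (x : 'cV[R]_n) : pinj p ->
  \sum_(i < m) (rep p A *m x) i 0 ^+ 2 <=
  \sum_(i < m) (A *m x) i 0 ^+ 2 + \sum_(j < n) x j 0 ^+ 2.
Proof.
move=> pi.
pose g i := \sum_(j < n) (p i == Some j)%:R * x j 0 ^+ 2.
apply: (@le_trans _ _ (\sum_(i < m) ((A *m x) i 0 ^+ 2 + g i))).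
  apply: ler_sum => i _; rewrite rep_mul /g.
  case e: (p i) => [k|].
    rewrite (bigD1 k) //= eqxx mul1r big1 ?addr0.
      by rewrite lerDr sqr_ge0.
    by move=> l /negPf nl; rewrite (_ : (Some k == Some l) = false) ?mul0r //; apply/eqP => -[] /eqP; rewrite eq_sym nl.
  by rewrite big1 ?addr0 // => l _; rewrite mul0r.
rewrite big_split /= lerD2l /g exchange_big /=.
apply: ler_sum => j _.
rewrite -mulr_suml ler_piMl ?sqr_ge0 //.
case: (pickP (fun i => p i == Some j)) => [i0 hi0|none].
  rewrite (bigD1 i0) //= hi0 big1 ?addr0 //.
  move=> i ni; case: eqP => // ei; move/eqP: hi0 => hi0.
  by rewrite (pi _ _ _ ei hi0) eqxx in ni.
by rewrite big1 ?ler01 // => i _; rewrite none.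
Qed.

End Norm.

Theorem mainTheorem6 (R : realType) (m n s : nat) :
  (s <= m)%N -> (m <= n)%N ->
  forall A : 'M[int]_(m, n),
    any_s_cols_indep s (intmx R A) ->
    exists B : 'M[int]_(m, n),
      [/\ any_s_cols_indep s (intmx R B),
          \rank (intmx R B) = m &
          opnorm (intmx R B) <= Num.sqrt (1 + opnorm (intmx R A) ^+ 2)].
Proof.
move=> sm mn A hA.
set A' := intmx R A.
have [p [pi sub rk]] := key A' mn.
pose B := \matrix_(t, l) if p t is Some k then ((k == l)%:R : int) else A t l.
have eB : intmx R B = rep p A'.
  apply/matrixP => t l; rewrite !mxE; case: (p t) => [k|] //.
  by case: (k == l).
exists B; rewrite eB; split => //.
  move=> f injf; have /eqP h := hA f injf.
  case/submxP: sub => D eD.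
  have eD' : intmx R A = D *m rep p A' := eD.
  rewrite eD' -mulmx_colsub trmx_mul in h.
  by rewrite /row_free eqn_leq rank_leq_row /= -{1}h mxrankM_maxl.
apply: opnorm_le => x hx.
rewrite {1}/norm2 ler_sqrt; last first.
  by apply: addr_ge0; [exact: ler01 | exact: sqr_ge0].
apply: le_trans (sum_rep A' x pi) _.
rewrite -(norm2_sq (A' *m x)) -(norm2_sq x).
have h1 := opnorm_ub A' hx; have h2 := norm2_ge0 (A' *m x); have h3 := norm2_ge0 x.
have h4 : norm2 x ^+ 2 <= 1 by exact: exprn_ile1.
have h5 : norm2 (A' *m x) ^+ 2 <= opnorm A' ^+ 2.
  by rewrite !expr2; apply: ler_pM.
by rewrite addrC; apply: lerD.
Qed.
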